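(* Let $K_t,K_r,M_r,N_t$ be positive integers with $N_t\le K_rM_r$. Consider $K_t$ transmitters with $N_t$ antennas each and $K_r$ receivers with $M_r$ antennas each, where $\mathbf{H}_{jk}\in\mathbb{C}^{M_r\times N_t}$ denotes the channel matrix from transmitter $k$ to receiver $j$, with all entries of all channel matrices i.i.d. zero-mean unit-variance circularly symmetric complex Gaussian. Let $\kappa_t$ be an integer with $0\le \kappa_t\le K_t-1$ satisfying \[ (K_t-1)N_t\le K_r(K_t-\kappa_t)M_r<K_tN_t, \] and let $d$ be a positive integer satisfying \[ d\le K_tN_t-K_r(K_t-\kappa_t)M_r . \] Then almost surely there exist precoders $\mathbf{V}_k\in\mathbb{C}^{N_t\times d}$, $k=1,\dots,K_t$, such that each $\mathbf{V}_k$ has full column rank $d$ and \[ \dim\Big(\mathcal{C}\big(\mathbf{H}_{j1}\mathbf{V}_1,\mathbf{H}_{j2}\mathbf{V}_2,\dots,\mathbf{H}_{jK_t}\mathbf{V}_{K_t}\big)\Big)\le\kappa_t d\qquad\text{for all } j=1,\dots,K_r . \]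
   Context: $\mathcal{C}(\mathbf{A}_1,\dots,\mathbf{A}_n)$ denotes the column space of the horizontally concatenated matrix $[\mathbf{A}_1\ \mathbf{A}_2\ \cdots\ \mathbf{A}_n]$. *)

(* Defs.v *)
From HB Require Import structures.
From mathcomp Require Import all_boot all_order all_algebra.
Set Implicit Arguments. Unset Strict Implicit. Unset Printing Implicit Defensive.
Import Order.TTheory GRing.Theory Num.Theory.
Local Open Scope ring_scope.

Inductive mpoly (V R : Type) : Type :=
  | MPX of V
  | MPC of R
  | MPAdd of mpoly V R & mpoly V R
  | MPMul of mpoly V R & mpoly V R.

Fixpoint mpeval (V : Type) (R : pzRingType) (x : V -> R) (p : mpoly V R) : R :=
  match p with
  | MPX v => x v
  | MPC c => c
  | MPAdd p q => mpeval x p + mpeval x q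
  | MPMul p q => mpeval x p * mpeval x q
  end.

(* "P holds generically": P holds on a nonempty Zariski-open subset of R^V,
   i.e. outside the zero set of a polynomial that is not identically zero. *)
Definition generic (V : Type) (R : pzRingType) (P : (V -> R) -> Prop) : Prop :=
  exists p : mpoly V R,
    (exists x0 : V -> R, mpeval x0 p != 0) /\
    (forall x : V -> R, mpeval x p != 0 -> P x).

Definition chan (C : pzRingType) (Kr Kt Mr Nt : nat)
  (x : 'I_Kr * 'I_Kt * 'I_Mr * 'I_Nt -> C) (j : 'I_Kr) (k : 'I_Kt)
  : 'M[C]_(Mr, Nt) :=
  \matrix_(a < Mr, b < Nt) x (j, k, a, b).

(* Main.v *)
Require Import Defs.
From HB Require Import structures.
From mathcomp Require Import all_boot all_order all_algebra.
From mathcomp Require Import zify fingroup perm.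
Set Implicit Arguments. Unset Strict Implicit. Unset Printing Implicit Defensive.
Import Order.TTheory GRing.Theory Num.Theory.
Local Open Scope ring_scope.

Section PFun.
Variable C : numClosedFieldType.
Variable W : Type.

Definition pfun (f : (W -> C) -> C) := exists p : mpoly W C, forall y, mpeval y p = f y.

Lemma pfun_ext f g : pfun f -> (forall y, f y = g y) -> pfun g.
Proof. by move=> [p hp] e; exists p => y; rewrite hp e. Qed.

Lemma pfun_cst c : pfun (fun _ => c).
Proof. by exists (MPC W c). Qed.

Lemma pfun_var w : pfun (fun y => y w).
Proof. by exists (MPX C w). Qed.

Lemma pfun_add f g : pfun f -> pfun g -> pfun (fun y => f y + g y).
Proof. by move=> [p hp] [q hq]; exists (MPAdd p q) => y /=; rewrite hp hq. Qed.

Lemma pfun_mul f g : pfun f -> pfun g -> pfun (fun y => f y * g y).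
Proof. by move=> [p hp] [q hq]; exists (MPMul p q) => y /=; rewrite hp hq. Qed.

Lemma pfun_opp f : pfun f -> pfun (fun y => - f y).
Proof.
move=> hf; apply: pfun_ext (pfun_mul (pfun_cst (-1)) hf) _ => y.
by rewrite mulN1r.
Qed.

Lemma pfun_sum (I : Type) (r : seq I) (P : pred I) (F : I -> (W -> C) -> C) :
  (forall i, pfun (F i)) -> pfun (fun y => \sum_(i <- r | P i) F i y).
Proof.
move=> hF; elim: r => [|i r ih].
  by apply: pfun_ext (pfun_cst 0) _ => y; rewrite big_nil.
case: (boolP (P i)) => Pi.
  by apply: pfun_ext (pfun_add (hF i) ih) _ => y; rewrite big_cons Pi.
by apply: pfun_ext ih _ => y; rewrite big_cons (negbTE Pi).
Qed.

Lemma pfun_prod (I : Type) (r : seq I) (P : pred I) (F : I -> (W -> C) -> C) :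
  (forall i, pfun (F i)) -> pfun (fun y => \prod_(i <- r | P i) F i y).
Proof.
move=> hF; elim: r => [|i r ih].
  by apply: pfun_ext (pfun_cst 1) _ => y; rewrite big_nil.
case: (boolP (P i)) => Pi.
  by apply: pfun_ext (pfun_mul (hF i) ih) _ => y; rewrite big_cons Pi.
by apply: pfun_ext ih _ => y; rewrite big_cons (negbTE Pi).
Qed.

Lemma pfun_det n (A : (W -> C) -> 'M[C]_n) :
  (forall i j, pfun (fun y => A y i j)) -> pfun (fun y => \det (A y)).
Proof.
move=> hA; rewrite /determinant.
apply: pfun_sum => s; apply: pfun_mul; first exact: pfun_cst.
by apply: pfun_prod => i; apply: hA.
Qed.

Lemma mpeval_ext (y1 y2 : W -> C) p : (forall w, y1 w = y2 w) -> mpeval y1 p = mpeval y2 p.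
Proof. by move=> e; elim: p => //= [p -> q ->|p -> q ->]. Qed.

Lemma line_poly (p : mpoly W C) (a b : W -> C) :
  exists P : {poly C}, forall t, mpeval (fun w => a w + t * (b w - a w)) p = P.[t].
Proof.
elim: p => [v|c|p [P hP] q [Q hQ]|p [P hP] q [Q hQ]].
- exists ((a v)%:P + 'X * (b v - a v)%:P) => t.
  by rewrite /= hornerD hornerC hornerM hornerX hornerC.
- by exists c%:P => t; rewrite /= hornerC.
- by exists (P + Q) => t; rewrite /= hP hQ hornerD.
- by exists (P * Q) => t; rewrite /= hP hQ hornerM.
Qed.

Lemma poly_nonroot (P : {poly C}) : P != 0 -> exists t, P.[t] != 0.
Proof.
move=> P0.
have [/allPn [t _ ht]|hall] := boolP (~~ all (root P) [seq i%:R | i <- iota 0 (size P)]).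
  by exists t.
move: hall; rewrite negbK => hall.
have : P = 0.
  apply: (@roots_geq_poly_eq0 _ P _ hall).
  - rewrite map_inj_uniq ?iota_uniq //; move=> i j /eqP; rewrite eqr_nat.
    by move/eqP.
  - by rewrite size_map size_iota.
by move/eqP; rewrite (negbTE P0).
Qed.

Lemma gen2 (f g : (W -> C) -> C) : pfun f -> pfun g ->
  (exists a, f a != 0) -> (exists b, g b != 0) -> exists y, f y * g y != 0.
Proof.
move=> [p hp] [q hq] [a ha] [b hb].
have [P hP] := line_poly p a b; have [Q hQ] := line_poly q a b.
have P0 : P.[0] != 0.
  rewrite -hP (@mpeval_ext _ a) ?hp // => w; by rewrite mul0r addr0.
have Q1 : Q.[1] != 0.
  rewrite -hQ (@mpeval_ext _ b) ?hq // => w; by rewrite mul1r addrC subrK.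
have PQ0 : P * Q != 0.
  rewrite mulf_neq0 //.
    by apply: contraNneq P0 => ->; rewrite horner0.
  by apply: contraNneq Q1 => ->; rewrite horner0.
have [t ht] := poly_nonroot PQ0.
exists (fun w => a w + t * (b w - a w)).
by rewrite -hp -hq hP hQ -hornerM.
Qed.

Lemma gen_prod (I : Type) (r : seq I) (F : I -> (W -> C) -> C) :
  (forall i, pfun (F i)) -> (forall i, exists y, F i y != 0) ->
  exists y, \prod_(i <- r) F i y != 0.
Proof.
move=> hF hE; elim: r => [|i r [y hy]].
  by exists (fun _ => 0); rewrite big_nil oner_neq0.
have [z hz] := gen2 (hF i) (pfun_prod r predT hF) (hE i) (ex_intro _ y hy).
by exists z; rewrite big_cons.
Qed.
End PFun.

Section Subst.
Variable C : numClosedFieldType.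
Variables X Y : Type.

Definition joinv (x : X -> C) (c : Y -> C) : X + Y -> C :=
  fun w => match w with inl u => x u | inr v => c v end.

Lemma pfun_subst (f : (X + Y -> C) -> C) (c : Y -> C) : pfun f ->
  exists q : mpoly X C, forall x, mpeval x q = f (joinv x c).
Proof.
move=> [p hp].
suff [q hq] : exists q : mpoly X C, forall x, mpeval x q = mpeval (joinv x c) p.
  by exists q => x; rewrite hq hp.
clear hp; elim: p => [[u|v]|c0|p [P hP] q [Q hQ]|p [P hP] q [Q hQ]].
- by exists (MPX C u).
- by exists (MPC X (c v)).
- by exists (MPC X c0).
- by exists (MPAdd P Q) => x /=; rewrite hP hQ.
- by exists (MPMul P Q) => x /=; rewrite hP hQ.
Qed.
End Subst.

Section LinAlg.
Variable F : fieldType.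

Definition selmx m n (s : 'I_m -> 'I_n) : 'M[F]_(n, m) :=
  \matrix_(c, i) (s i == c)%:R.

Lemma mul_selmx m n (A : 'M[F]_(m, n)) k (s : 'I_k -> 'I_n) :
  A *m selmx s = colsub s A.
Proof.
apply/matrixP => i j; rewrite !mxE (bigD1 (s j)) //= mxE eqxx mulr1 big1 ?addr0 //.
by move=> c /negbTE nc; rewrite mxE eq_sym nc mulr0.
Qed.

Definition kpar m n p (A : 'M[F]_(m, n)) (s : 'I_m -> 'I_n) (g : 'M[F]_(n, p)) :=
  (\det (colsub s A)) *: g - selmx s *m \adj (colsub s A) *m A *m g.

Lemma kparP m n p (A : 'M[F]_(m, n)) s (g : 'M[F]_(n, p)) : A *m kpar A s g = 0.
Proof.
rewrite /kpar mulmxBr -scalemxAr !mulmxA mul_selmx mul_mx_adj mul_scalar_mx.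
idtac.
by rewrite -scalemxAl subrr.
Qed.

Lemma kpar_ker m n p (A : 'M[F]_(m, n)) s (g : 'M[F]_(n, p)) :
  A *m g = 0 -> kpar A s g = (\det (colsub s A)) *: g.
Proof. by move=> h; rewrite /kpar -mulmxA h mulmx0 subr0. Qed.

Lemma det_neq0_inj m (B : 'M[F]_m) :
  (forall w : 'cV[F]_m, B *m w = 0 -> w = 0) -> \det B != 0.
Proof.
move=> hinj; rewrite -unitfE -unitmxE -row_free_unit /row_free.
apply/negPn/negP => hr.
have hk : kermx B^T != 0.
  rewrite -mxrank_eq0 mxrank_ker mxrank_tr subn_eq0 -ltnNge.
  by rewrite ltn_neqAle hr rank_leq_row.
have [i hi] : exists i, row i (kermx B^T) != 0.
  apply/existsP; apply: contraR hk => /existsPn h; apply/eqP/row_matrixP => i.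
  by rewrite row0; apply/eqP/negPn.
have : B *m (row i (kermx B^T))^T = 0.
  by rewrite -[B]trmxK -trmx_mul trmxK -row_mul mulmx_ker row0 trmx0.
by move/hinj/eqP; rewrite trmx_eq0 (negbTE hi).
Qed.

Lemma rank_of_minor N d (V : 'M[F]_(N, d)) (r : 'I_d -> 'I_N) :
  \det (rowsub r V) != 0 -> \rank V = d.
Proof.
move=> h; apply/eqP; rewrite eqn_leq rank_leq_col /=.
have e : rowsub r V = (selmx r)^T *m V.
  apply/matrixP => i j; rewrite !mxE (bigD1 (r i)) //= !mxE eqxx mul1r.
  by rewrite big1 ?addr0 // => c /negbTE nc; rewrite !mxE eq_sym nc mul0r.
move: h; rewrite e -unitfE -unitmxE => /mxrank_unit hd.
by rewrite -{1}hd; exact: mxrankM_maxr.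
Qed.

Lemma rank_mxrow_fact Mr q T d (Z : 'M[F]_(Mr, q)) (E : 'I_T -> 'M[F]_(q, d)) :
  (\rank (\mxrow_(k < T) (Z *m E k)) <= q)%N.
Proof.
rewrite -mul_mxrow; apply: leq_trans (mxrankM_maxl _ _) _; exact: rank_leq_col.
Qed.
End LinAlg.

Section PMx.
Variable C : numClosedFieldType.
Variable W : Type.
Definition pmx m n (A : (W -> C) -> 'M[C]_(m, n)) := forall i j, pfun (fun y => A y i j).

Lemma pmx_mul m n p (A : (W -> C) -> 'M[C]_(m, n)) (B : (W -> C) -> 'M[C]_(n, p)) :
  pmx A -> pmx B -> pmx (fun y => A y *m B y).
Proof.
move=> hA hB i j.
have h := pfun_sum (index_enum 'I_n) predT (fun k => pfun_mul (hA i k) (hB k j)).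
by apply: pfun_ext h _ => y; rewrite mxE.
Qed.

Lemma pmx_sub m n (A B : (W -> C) -> 'M[C]_(m, n)) :
  pmx A -> pmx B -> pmx (fun y => A y - B y).
Proof.
move=> hA hB i j; apply: pfun_ext (pfun_add (hA i j) (pfun_opp (hB i j))) _.
by move=> y; rewrite !mxE.
Qed.

Lemma pmx_scale m n (a : (W -> C) -> C) (A : (W -> C) -> 'M[C]_(m, n)) :
  pfun a -> pmx A -> pmx (fun y => a y *: A y).
Proof.
move=> ha hA i j; apply: pfun_ext (pfun_mul ha (hA i j)) _.
by move=> y; rewrite !mxE.
Qed.

Lemma pmx_cst m n (A : 'M[C]_(m, n)) : pmx (fun _ => A).
Proof. by move=> i j; apply: pfun_cst. Qed.

Lemma pmx_colsub m n k (A : (W -> C) -> 'M[C]_(m, n)) (s : 'I_k -> 'I_n) :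
  pmx A -> pmx (fun y => colsub s (A y)).
Proof. by move=> hA i j; apply: pfun_ext (hA i (s j)) _ => y; rewrite mxE. Qed.

Lemma pmx_rowsub m n k (A : (W -> C) -> 'M[C]_(m, n)) (s : 'I_k -> 'I_m) :
  pmx A -> pmx (fun y => rowsub s (A y)).
Proof. by move=> hA i j; apply: pfun_ext (hA (s i) j) _ => y; rewrite mxE. Qed.

Lemma pmx_adj n (A : (W -> C) -> 'M[C]_n) : pmx A -> pmx (fun y => \adj (A y)).
Proof.
move=> hA i j.
have hd : pfun (fun y => \det (row' j (col' i (A y)))).
  by apply: pfun_det => a b; apply: pfun_ext (hA _ _) _ => y; rewrite !mxE.
have h := pfun_mul (@pfun_cst C W ((-1) ^+ (j + i))) hd.
by apply: pfun_ext h _ => y; rewrite mxE /cofactor.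
Qed.
End PMx.

Section Setup.
Variable C : numClosedFieldType.
Variables Kt Kr Mr Nt kt d : nat.
Hypothesis hKt : (0 < Kt)%N.
Hypothesis hNt : (0 < Nt)%N.

Definition dec (m : 'I_(Kr * Mr)) : 'I_Kr * 'I_Mr :=
  enum_val (cast_ord (esym (mxvec_cast Kr Mr)) m).

Lemma dec_enc j a : dec (mxvec_index j a) = (j, a).
Proof. by rewrite /dec /mxvec_index cast_ordK enum_rankK. Qed.

Lemma enc_dec m : mxvec_index (dec m).1 (dec m).2 = m.
Proof.
rewrite /dec /mxvec_index -surjective_pairing enum_valK.
by rewrite cast_ordKV.
Qed.

Definition Rw := ('I_Kt * 'I_(Kr * Mr))%type.
Definition Cl := (('I_Kt * 'I_Nt) + ('I_kt * 'I_(Kr * Mr)))%type.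
Definition Xv := ('I_Kr * 'I_Kt * 'I_Mr * 'I_Nt)%type.
Definition Wv := (Xv + (('I_Kt * 'I_kt) + (Cl * 'I_d)))%type.

Definition Aent (y : Wv -> C) (r : Rw) (c : Cl) : C :=
  match c with
  | inl (k', cc) => if r.1 == k' then y (inl ((dec r.2).1, r.1, (dec r.2).2, cc)) else 0
  | inr (l, m) => if m == r.2 then - y (inr (inl (r.1, l))) else 0
  end.

Definition Amx (y : Wv -> C) : 'M[C]_(#|{:Rw}|, #|{:Cl}|) :=
  \matrix_(i, c) Aent y (enum_val i) (enum_val c).

Definition gmx (y : Wv -> C) : 'M[C]_(#|{:Cl}|, d) :=
  \matrix_(c, t) y (inr (inr (enum_val c, t))).

Definition Kd := (Kt * Nt - Kr * (Kt - kt) * Mr)%N.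

Definition Sel : pred Cl := fun c =>
  match c with inl _ => true | inr (l, m) => ((l < kt.-1) || (m < Kr * Mr - Kd))%N end.

Definition c0 : Cl := inl (Ordinal hKt, Ordinal hNt).

Definition sigm (i : 'I_#|{:Rw}|) : 'I_#|{:Cl}| := enum_rank (nth c0 (enum Sel) i).

Definition Umx y := kpar (Amx y) sigm (gmx y).

Definition Vb y (k : 'I_Kt) : 'M[C]_(Nt, d) :=
  \matrix_(cc, t) Umx y (enum_rank (inl (k, cc) : Cl)) t.

Definition rsel (t : 'I_d) : 'I_Nt := insubd (Ordinal hNt) (Nt - Kd + t)%N.

Definition Fk y k := \det (rowsub rsel (Vb y k)).

Lemma pmx_Amx : pmx (C := C) Amx.
Proof.
move=> i j; rewrite /Amx.
apply: (@pfun_ext _ _ (fun y => Aent y (enum_val i) (enum_val j))); last by move=> y; rewrite mxE.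
case: (enum_val j) => [[k' cc]|[l m]] /=.
  by case: eqP => _; [apply: pfun_var | apply: pfun_cst].
by case: eqP => _; [apply: pfun_opp; apply: pfun_var | apply: pfun_cst].
Qed.

Lemma pfun_Fk k : pfun (C := C) (fun y => Fk y k).
Proof.
apply: pfun_det; apply: pmx_rowsub.
have hU : pmx (C := C) Umx.
  rewrite /Umx /kpar; apply: pmx_sub.
    apply: pmx_scale; first by apply: pfun_det; apply: pmx_colsub; apply: pmx_Amx.
    by move=> i j; apply: pfun_ext (@pfun_var C Wv (inr (inr (enum_val i, j)))) _ => y; rewrite mxE.
  apply: pmx_mul; last by move=> i j; apply: pfun_ext (@pfun_var C Wv (inr (inr (enum_val i, j)))) _ => y; rewrite mxE.
  apply: pmx_mul; last exact: pmx_Amx.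
  apply: pmx_mul; first exact: pmx_cst.
  by apply: pmx_adj; apply: pmx_colsub; apply: pmx_Amx.
move=> i j; apply: pfun_ext (hU (enum_rank (inl (k, i) : Cl)) j) _ => y.
by rewrite /Vb [RHS]mxE.
Qed.
End Setup.

Lemma sum_enum (R : nmodType) (T : finType) (F : T -> R) :
  \sum_(i < #|{:T}|) F (enum_val i) = \sum_x F x.
Proof.
rewrite (reindex (@enum_rank T)); last by apply: onW_bij; apply: enum_rank_bij.
by apply: eq_bigr => x _; rewrite enum_rankK.
Qed.

Section Rel.
Variable C : numClosedFieldType.
Variables Kt Kr Mr Nt kt d : nat.
Hypothesis hKt : (0 < Kt)%N.
Hypothesis hNt : (0 < Nt)%N.

Local Notation Wv := (@Wv Kt Kr Mr Nt kt d).
Local Notation Cl := (@Cl Kt Kr Mr Nt kt).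
Local Notation Rw := (@Rw Kt Kr Mr).

Lemma Arow (y : Wv -> C) p (U : 'M[C]_(#|{:Cl}|, p)) (k : 'I_Kt) (m : 'I_(Kr * Mr)) (t : 'I_p) :
  (Amx y *m U) (enum_rank ((k, m) : Rw)) t =
  \sum_(cc < Nt) y (inl ((dec m).1, k, (dec m).2, cc)) * U (enum_rank (inl (k, cc) : Cl)) t
  - \sum_(l < kt) y (inr (inl (k, l))) * U (enum_rank (inr (l, m) : Cl)) t.
Proof.
rewrite mxE.
transitivity (\sum_(x : Cl) Aent y (k, m) x * U (enum_rank x) t).
  rewrite -[RHS]sum_enum; apply: eq_bigr => c _; by rewrite mxE enum_valK enum_rankK.
rewrite (big_sumType _ predT) /=; congr (_ + _).
  rewrite (eq_bigr (fun p => Aent y (k, m) (inl (p.1, p.2)) * U (enum_rank (inl (p.1, p.2) : Cl)) t));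
    last by case.
  rewrite -(pair_bigA _ (fun k' cc => Aent y (k, m) (inl (k', cc)) * U (enum_rank (inl (k', cc) : Cl)) t)).
  rewrite (bigD1 k) //= eqxx [X in _ + X]big1 ?addr0 // => k' nk.
  by apply: big1 => cc _; rewrite /= eq_sym (negbTE nk) mul0r.
rewrite (eq_bigr (fun p => Aent y (k, m) (inr (p.1, p.2)) * U (enum_rank (inr (p.1, p.2) : Cl)) t));
  last by case.
rewrite -(pair_bigA _ (fun l m' => Aent y (k, m) (inr (l, m')) * U (enum_rank (inr (l, m') : Cl)) t)).
rewrite -sumrN; apply: eq_bigr => l _.
rewrite (bigD1 m) //= eqxx [X in _ + X]big1 ?addr0 ?mulNr // => m' nm.
by rewrite (negbTE nm) mul0r.
Qed.
End Rel.

Lemma rank_sum_le (F : fieldType) p q n (A : 'I_n -> 'M[F]_(p, q)) :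
  (\rank ((\sum_(l < n) A l)%R) <= \sum_(l < n) \rank (A l))%N.
Proof.
apply: (big_ind2 (fun (B : 'M[F]_(p, q)) (r : nat) => \rank B <= r)%N).
- by rewrite mxrank0.
- move=> B1 r1 B2 r2 h1 h2; apply: leq_trans (mxrank_add _ _) _; exact: leq_add.
- by [].
Qed.

Section Assemble.
Variable C : numClosedFieldType.
Variables Kt Kr Mr Nt kt d : nat.
Hypothesis hKt : (0 < Kt)%N.
Hypothesis hNt : (0 < Nt)%N.

Local Notation Wv := (@Wv Kt Kr Mr Nt kt d).
Local Notation Cl := (@Cl Kt Kr Mr Nt kt).
Local Notation Rw := (@Rw Kt Kr Mr).
Local Notation Fk := (@Fk C Kt Kr Mr Nt kt d hKt hNt).
Local Notation Vb := (@Vb C Kt Kr Mr Nt kt d hKt hNt).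
Local Notation Umx := (@Umx C Kt Kr Mr Nt kt d hKt hNt).

Definition Zl (y : Wv -> C) (j : 'I_Kr) (l : 'I_kt) : 'M[C]_(Mr, d) :=
  \matrix_(a, t) Umx y (enum_rank (inr (l, mxvec_index j a) : Cl)) t.

Lemma relation (x : 'I_Kr * 'I_Kt * 'I_Mr * 'I_Nt -> C) c j k :
  let y := joinv x c in
  chan x j k *m Vb y k = \sum_(l < kt) Zl y j l *m (y (inr (inl (k, l))))%:M.
Proof.
move=> y; apply/matrixP => a t.
have h := Arow y (Umx y) k (mxvec_index j a) t.
rewrite /Umx kparP mxE -/(Umx y) in h.
move/eqP: h; rewrite eq_sym subr_eq0 => /eqP h.
rewrite mxE summxE.
transitivity (\sum_(cc < Nt) y (inl ((dec (mxvec_index j a)).1, k, (dec (mxvec_index j a)).2, cc))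
   * Umx y (enum_rank (inl (k, cc) : Cl)) t).
  by apply: eq_bigr => cc _; rewrite !mxE dec_enc.
rewrite h; apply: eq_bigr => l _.
by rewrite mul_mx_scalar !mxE mulrC.
Qed.

Lemma assemble :
  (forall k, exists y, Fk y k != 0) ->
  generic (fun x : 'I_Kr * 'I_Kt * 'I_Mr * 'I_Nt -> C =>
    exists V : 'I_Kt -> 'M[C]_(Nt, d),
      (forall k : 'I_Kt, \rank (V k) = d) /\
      (forall j : 'I_Kr,
         (\rank (\mxrow_(k < Kt) (chan x j k *m V k)) <= kt * d)%N)).
Proof.
move=> hpt.
have hF : forall k, pfun (fun y : Wv -> C => Fk y k) by move=> k; exact: pfun_Fk.
have [ys hys] := gen_prod (enum 'I_Kt) hF hpt.
have hP := pfun_prod (enum 'I_Kt) predT hF.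
set c := fun w => ys (inr w).
have [q hq] := pfun_subst c hP.
exists q; split.
  exists (fun u => ys (inl u)); rewrite hq.
  have [p hp] := hP; rewrite -hp (@mpeval_ext _ _ _ ys); first by rewrite hp.
  by case.
move=> x hx; set y := joinv x c.
have hk : forall k, Fk y k != 0.
  move=> k; move: hx; rewrite hq -/y.
  by rewrite prodf_seq_neq0 => /allP /(_ k); rewrite mem_enum; apply.
exists (Vb y); split; first by move=> k; apply: rank_of_minor (hk k).
move=> j.
rewrite (eq_mxrow (fun k => relation x c j k)) -/y mxrow_sum.
apply: leq_trans (rank_sum_le _) _.
rewrite -[X in (_ <= X * d)%N]card_ord -sum_nat_const; apply: leq_sum => l _.
by rewrite -mul_mxrow; apply: leq_trans (mxrankM_maxl _ _) _; exact: rank_leq_col.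
Qed.
End Assemble.

Section Arith.
Variables Kt Kr Mr Nt kt d : nat.
Hypotheses (hKt : (0 < Kt)%N) (hKr : (0 < Kr)%N) (hMr : (0 < Mr)%N) (hNt : (0 < Nt)%N)
  (hNtKM : (Nt <= Kr * Mr)%N)
  (hkt : (kt <= Kt - 1)%N)
  (hlow : ((Kt - 1) * Nt <= Kr * (Kt - kt) * Mr)%N)
  (hup : (Kr * (Kt - kt) * Mr < Kt * Nt)%N)
  (hd : (0 < d)%N)
  (hdle : (d <= Kt * Nt - Kr * (Kt - kt) * Mr)%N).

Local Notation M := (Kr * Mr)%N.
Local Notation e := (Kr * Mr - Nt)%N.
Local Notation K := (Kt * Nt - Kr * (Kt - kt) * Mr)%N.

Lemma kt_gt0 : (0 < kt)%N.
Proof.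
case: kt hup hkt => [|k] hu _ //.
rewrite subn0 in hu.
have : (Kt * Nt <= Kt * (Kr * Mr))%N by rewrite leq_mul2l hNtKM orbT.
nia.
Qed.

Lemma K_gt0 : (0 < K)%N.
Proof. by rewrite subn_gt0. Qed.

Lemma K_leN : (K <= Nt)%N.
Proof.
rewrite leq_subLR.
have h : (Kt * Nt = (Kt - 1) * Nt + Nt)%N by rewrite mulnBl mul1n subnK // leq_pmull.
rewrite h; lia.
Qed.

Lemma aM_eq : (Kr * (Kt - kt) * Mr = (Kt - kt) * M)%N.
Proof. by rewrite -mulnA mulnCA. Qed.

Lemma Te_eq : (Kt * e + K = kt * M)%N.
Proof.
have hk := kt_gt0.
rewrite aM_eq mulnBr.
have h1 : ((Kt - kt) * M + kt * M = Kt * M)%N by rewrite -mulnDl subnK // ; lia.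
have h2 : ((Kt - kt) * M <= Kt * Nt)%N by rewrite -aM_eq ltnW.
have h3 : (Kt * Nt <= Kt * M)%N by rewrite leq_mul2l hNtKM orbT.
lia.
Qed.

Lemma e_gt0_of (hb : (1 < kt)%N) : (0 < e)%N.
Proof.
rewrite subn_gt0 ltn_neqAle hNtKM andbT; apply/negP => /eqP hNM.
move: hlow; rewrite aM_eq -hNM leq_mul2r (negbTE (lt0n_neq0 hNt)) /=.
lia.
Qed.
End Arith.



Section Point.
Variable C : numClosedFieldType.
Variables Kt Kr Mr Nt kt d : nat.
Hypotheses (hKt : (0 < Kt)%N) (hKr : (0 < Kr)%N) (hMr : (0 < Mr)%N) (hNt : (0 < Nt)%N)
  (hNtKM : (Nt <= Kr * Mr)%N)
  (hkt : (kt <= Kt - 1)%N)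
  (hlow : ((Kt - 1) * Nt <= Kr * (Kt - kt) * Mr)%N)
  (hup : (Kr * (Kt - kt) * Mr < Kt * Nt)%N)
  (hd : (0 < d)%N)
  (hdle : (d <= Kt * Nt - Kr * (Kt - kt) * Mr)%N).
Variable beta : 'I_Kt.

Local Notation M := (Kr * Mr)%N.
Local Notation e := (Kr * Mr - Nt)%N.
Local Notation K := (Kt * Nt - Kr * (Kt - kt) * Mr)%N.

Let hb : (0 < kt)%N := (@kt_gt0 Kt Kr Mr Nt kt d hKt hKr hMr hNt hNtKM hkt hlow hup hd hdle).
Let hK0 : (0 < K)%N := (@K_gt0 Kt Kr Mr Nt kt hup).
Let hKN : (K <= Nt)%N := (@K_leN Kt Kr Mr Nt kt d hKt hKr hMr hNt hNtKM hkt hlow hup hd hdle).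
Let hTe : (Kt * e + K = kt * M)%N := (@Te_eq Kt Kr Mr Nt kt d hKt hKr hMr hNt hNtKM hkt hlow hup hd hdle).
Let hM0 : (0 < M)%N. Proof. exact: leq_trans hNt hNtKM. Qed.
Let he0 : (1 < kt)%N -> (0 < e)%N := (@e_gt0_of Kt Kr Mr Nt kt d hKt hKr hMr hNt hNtKM hkt hlow hup hd hdle).

Definition z0 : 'I_Kt := Ordinal hKt.
Definition kap (k : 'I_Kt) : nat := tperm beta z0 k.

Lemma kap_lt k : (kap k < Kt)%N. Proof. exact: ltn_ord. Qed.

Lemma kap_beta : kap beta = 0%N. Proof. by rewrite /kap tpermL. Qed.

Lemma kap_onto v : (v < Kt)%N -> exists k, kap k = v.
Proof.
move=> hv; exists (tperm beta z0 (Ordinal hv)).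
by rewrite /kap tpermK.
Qed.

Definition pos (k : 'I_Kt) (cc : nat) : nat := (((kap k).+1 * e + cc) %% M)%N.

Lemma pos_lt k cc : (pos k cc < M)%N. Proof. by rewrite ltn_pmod. Qed.

Lemma pos_inj k c1 c2 : (c1 < M)%N -> (c2 < M)%N -> pos k c1 = pos k c2 -> c1 = c2.
Proof.
move=> h1 h2 /eqP; rewrite /pos eqn_modDl !modn_small //.
by move/eqP.
Qed.

Lemma pos_hit k r : (r < M)%N -> exists2 c, (c < M)%N & pos k c = r.
Proof.
move=> hr; set X := ((kap k).+1 * e)%N.
have hX := divn_eq X M; have hXm := ltn_pmod X hM0.
exists ((r + (M - X %% M)) %% M)%N; first by rewrite ltn_pmod.
rewrite /pos -/X modnDmr.
have -> : (X + (r + (M - X %% M)) = (X %/ M).+1 * M + r)%N.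
  rewrite {1}hX mulSn; lia.
by rewrite modnMDl modn_small.
Qed.

Lemma layer_miss k (m j : nat) : (m < M)%N -> (m + j * M < Kt * e)%N ->
  kap k = ((m + j * M) %/ e)%N -> forall cc, (cc < Nt)%N -> pos k cc != m.
Proof.
move=> hm hP hk cc hcc; apply/eqP => hpos.
have he : (0 < e)%N.
  by case: (posnP e) hP => // ->; rewrite muln0.
set P := (m + j * M)%N.
have hPe := divn_eq P e; have hPr := ltn_pmod P he.
have hPM : (P %% M = m)%N by rewrite /P addnC modnMDl modn_small.
move: hpos; rewrite /pos hk.
have -> : (((P %/ e).+1 * e + cc) = P %/ e * e + (e + cc))%N by rewrite mulSn; lia.
move=> h1.
have : ((P %/ e * e + (e + cc)) %% M = (P %/ e * e + P %% e) %% M)%N by rewrite h1 -hPe hPM.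
move/eqP; rewrite eqn_modDl.
have h2 : (e + cc < M)%N by lia.
have h3 : (P %% e < M)%N by lia.
rewrite (modn_small h2) (modn_small h3); move/eqP; lia.
Qed.

Definition tv (k : 'I_Kt) : C := ((kap k).+1)%:R.
Definition rootsq (t : nat) : seq C :=
  [seq (((M - K + t + j * M) %/ e).+1)%:R | j <- iota 0 kt.-1].
Definition qp (t : nat) : {poly C} := \prod_(r <- rootsq t) ('X - r%:P).

Lemma qp_size t : size (qp t) = kt.
Proof. by rewrite size_prod_XsubC size_map size_iota prednK. Qed.

Lemma qp_root t k c : (t < K)%N -> (c < M)%N -> pos k c = (M - K + t)%N -> (Nt <= c)%N ->
  (qp t).[tv k] = 0.
Proof.
move=> ht hc hpos hNc; apply/rootP; rewrite root_prod_XsubC.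
have he : (0 < e)%N by lia.
set r := (M - K + t)%N.
have hr : (r < M)%N by rewrite /r; lia.
set P := (kap k * e + (c - Nt))%N.
have hPM : (P %% M = r)%N.
  rewrite /r -hpos /pos.
  have -> : ((kap k).+1 * e + c = P + M)%N by rewrite /P mulSn; lia.
  by rewrite modnDr.
have hPlt : (P < Kt * e)%N.
  have h1 := kap_lt k.
  have : (P < (kap k).+1 * e)%N by rewrite /P mulSn; lia.
  move=> h2; apply: (leq_trans h2); rewrite leq_mul2r h1 orbT //.
have hPe := divn_eq P M.
set j := (P %/ M)%N.
have hj : (j < kt.-1)%N.
  have h3 : (j * M < kt.-1 * M)%N.
    have -> : (kt.-1 * M = kt * M - M)%N by rewrite -subn1 mulnBl mul1n.
    rewrite -hTe; lia.
  by rewrite ltn_mul2r in h3; case/andP: h3.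
apply/mapP; exists j; first by rewrite mem_iota add0n.
have -> : (M - K + t + j * M = P)%N by rewrite /r in hPM; lia.
rewrite /tv /P divnMDl // divn_small ?addn0 //; lia.
Qed.

Local Notation Wv := (@Wv Kt Kr Mr Nt kt d).
Local Notation Cl := (@Cl Kt Kr Mr Nt kt).
Local Notation Rw := (@Rw Kt Kr Mr).

Definition U0 (c : Cl) (t : 'I_d) : C :=
  match c with
  | inl (k, cc) => ((pos k cc == M - K + t)%N)%:R * (qp t).[tv k]
  | inr (l, m) => ((val m == M - K + t)%N)%:R * (qp t)`_l
  end.

Definition ypt (w : Wv) : C :=
  match w with
  | inl (j, k, a, cc) => ((val (mxvec_index j a) == pos k cc)%N)%:R
  | inr (inl (k, l)) => tv k ^+ l
  | inr (inr (c, t)) => U0 c t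
  end.

Lemma ypt_ker : Amx ypt *m gmx ypt = 0.
Proof.
apply/matrixP => i t; rewrite [RHS]mxE -(enum_valK i).
case: (enum_val i) => k m.
rewrite Arow.
have ypt_inl : forall j k a cc, ypt (inl (j, k, a, cc)) = ((val (mxvec_index j a) == pos k cc)%N)%:R by [].
have ypt_E : forall k l, ypt (inr (inl (k, l))) = tv k ^+ l by [].
have ht : (t < K)%N by apply: leq_trans hdle.
set r := (M - K + t)%N.
have hr : (r < M)%N by rewrite /r; lia.
have eG : forall c : Cl, gmx ypt (enum_rank c) t = U0 c t.
  by move=> c; rewrite mxE enum_rankK.
rewrite (eq_bigr (fun cc : 'I_Nt => ((val m == pos k cc)%N)%:R * U0 (inl (k, cc)) t)); last first.
  by move=> cc _; rewrite eG ypt_inl enc_dec.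
rewrite (eq_bigr (fun l : 'I_kt => tv k ^+ l * U0 (inr (l, m)) t)); last by move=> l _; rewrite eG ypt_E.
rewrite /U0 /=.
have [emr|nmr] := eqVneq (val m) r; last first.
  rewrite !big1 ?subrr // => [l _|cc _]; first by rewrite mul0r mulr0.
  case: eqP => [e1|]; last by rewrite mul0r.
  by rewrite -e1 (negbTE nmr) mul0r mulr0.
rewrite emr.
have -> : \sum_(l < kt) tv k ^+ l * (true%:R * (qp t)`_l) = (qp t).[tv k].
  rewrite (horner_coef_wide _ (eq_leq (qp_size t))); apply: eq_bigr => l _.
  by rewrite mul1r mulrC.
have [cs hcs hpc] := pos_hit k hr.
have [hcN|hcN] := ltnP cs Nt.
  rewrite (bigD1 (Ordinal hcN)) //= hpc /r eqxx mul1r mul1r big1 ?addr0 ?subrr //.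
  move=> cc /eqP ncc; case: eqP => [e1|]; last by rewrite mul0r.
  exfalso; apply: ncc; apply: val_inj => /=; apply: (pos_inj (k := k)) => //.
    exact: leq_trans (ltn_ord cc) hNtKM.
  by rewrite hpc.
have hq := qp_root ht hcs hpc hcN.
rewrite hq big1 ?subrr // => cc _.
by rewrite mulr0 mulr0.
Qed.

Local Notation Sel := (@Sel Kt Kr Mr Nt kt).
Local Notation sigm := (@sigm Kt Kr Mr Nt kt hKt hNt).

Lemma sum_ltn (X n : nat) : (\sum_(i < n) ((i < X)%N : nat) = minn X n)%N.
Proof.
elim: n => [|n ih]; first by rewrite big_ord0 minn0.
rewrite big_ord_recr /= ih; case: (ltnP n X) => h /=; lia.
Qed.

Lemma card_Sel : (#|{:Rw}| <= #|Sel|)%N.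
Proof.
have -> : #|{:Rw}| = (Kt * M)%N by rewrite card_prod !card_ord.
rewrite -sum1_card big_mkcond /= (big_sumType _ predT) /=.
have -> : (\sum_(i : 'I_Kt * 'I_Nt) (if Sel (inl i) then 1 else 0) = Kt * Nt)%N.
  by rewrite /= sum_nat_const card_prod !card_ord muln1.
rewrite (eq_bigr (fun p => (if Sel (inr (p.1, p.2)) then 1 else 0)%N)); last by case.
rewrite -(pair_bigA _ (fun l m => (if Sel (inr (l, m)) then 1 else 0)%N)) /=.
have hin : forall l : 'I_kt, ((l < kt.-1) * K + (M - K) <=
    \sum_(m < M) (if (l < kt.-1) || (m < M - K) then 1 else 0))%N.
  move=> l; case hl : (l < kt.-1)%N => /=.
    rewrite mul1n sum_nat_const card_ord; lia.
  rewrite mul0n add0n (eq_bigr (fun m : 'I_M => ((m < M - K)%N : nat))); last first.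
    by move=> m _; case: (m < M - K)%N.
  by rewrite sum_ltn; lia.
have h : (\sum_(l < kt) ((l < kt.-1) * K + (M - K)) <=
   \sum_(l < kt) \sum_(m < M) (if (l < kt.-1) || (m < M - K) then 1 else 0))%N.
  by apply: leq_sum => l _; exact: hin.
rewrite big_split /= -big_distrl /= sum_ltn sum_nat_const card_ord in h.
have hKM : (K <= M)%N by lia.
have hk1 : (minn kt.-1 kt = kt.-1)%N by lia.
rewrite hk1 in h.
have e1 : (K + Kr * (Kt - kt) * Mr = Kt * Nt)%N by rewrite subnK // ltnW.
rewrite aM_eq in e1.
have e2 : ((Kt - kt) * M + kt * M = Kt * M)%N by rewrite -mulnDl subnK //; lia.
rewrite /Kd.
move: h; set S := (\sum_(l < kt) _)%N => h.
have hKK : (K + (Kt - kt) * M = Kt * Nt)%N by rewrite -aM_eq subnK // ltnW.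
move: h hKK e2 hKM; move: (Kt * Nt - Kr * (Kt - kt) * Mr)%N => KK h hKK e2 hKM.
have f1 : (kt.-1 * KK + KK = kt * KK)%N by rewrite addnC -mulSn prednK.
have f2 : (kt * (M - KK) + kt * KK = kt * M)%N by rewrite -mulnDr subnK.
move: h hKK e2 f1 f2.
move: (kt.-1 * KK)%N (kt * (M - KK))%N (kt * KK)%N (kt * M)%N ((Kt - kt) * M)%N (Kt * Nt)%N (Kt * M)%N.
move=> b1 b2 b3 b4 b5 b6 b7; lia.
Qed.

Lemma sig_sel i : Sel (enum_val (sigm i)).
Proof.
rewrite /sigm enum_rankK.
have hi : (i < size (enum Sel))%N by rewrite -cardE; apply: leq_trans (ltn_ord i) card_Sel.
by have := mem_nth (c0 Kr Mr kt hKt hNt) hi; rewrite mem_enum.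
Qed.

Lemma sig_inj : injective sigm.
Proof.
move=> i1 i2 /enum_rank_inj /eqP.
have hs := card_Sel; rewrite [#|Sel|]cardE in hs.
rewrite nth_uniq ?enum_uniq //.
- by move/eqP/val_inj.
- exact: leq_trans (ltn_ord i1) hs.
- exact: leq_trans (ltn_ord i2) hs.
Qed.

Lemma layer_bound (m : 'I_M) j :
  (j < (if (m < M - K)%N then kt else kt.-1))%N -> (m + j * M < Kt * e)%N.
Proof.
have hm := ltn_ord m.
have hKM : (K <= M)%N by lia.
have f : (kt.-1 * M + M = kt * M)%N by rewrite addnC -mulSn prednK.
case: ifP => hmK hj.
  have : (j * M <= kt.-1 * M)%N by rewrite leq_mul2r; apply/orP; right; lia.
  lia.
have hk2 : (kt.-1 = (kt.-1).-1.+1)%N by lia.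
have : (j * M <= (kt.-1).-1 * M)%N by rewrite leq_mul2r; apply/orP; right; lia.
have f2 : ((kt.-1).-1 * M + M = kt.-1 * M)%N by rewrite addnC -mulSn -hk2.
lia.
Qed.

Lemma ypt_det : \det (colsub sigm (Amx ypt)) != 0.
Proof.
apply: det_neq0_inj => w hw.
set u := selmx C sigm *m w.
have hAu : Amx ypt *m u = 0 by rewrite /u mulmxA mul_selmx.
have hu_nsel : forall c : Cl, ~~ Sel c -> u (enum_rank c) 0 = 0.
  move=> c hc; rewrite /u mxE big1 // => i _; rewrite mxE.
  case: eqP => [hs|]; last by rewrite mul0r.
  by exfalso; move: (sig_sel i); rewrite hs enum_rankK (negbTE hc).
have hrow : forall k (m : 'I_M),
    \sum_(cc < Nt) ((val m == pos k cc)%N)%:R * u (enum_rank (inl (k, cc) : Cl)) 0 =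
    \sum_(l < kt) tv k ^+ l * u (enum_rank (inr (l, m) : Cl)) 0.
  move=> k m; apply/eqP; rewrite -subr_eq0; apply/eqP.
  have := Arow ypt u k m 0; rewrite hAu mxE => h; rewrite [RHS]h.
  congr (_ - _); apply: eq_bigr => cc _ //.
  by rewrite [in RHS]/ypt enc_dec.
have hz : forall (l : 'I_kt) (m : 'I_M), u (enum_rank (inr (l, m) : Cl)) 0 = 0.
  move=> l0 m.
  set E := fun n : nat => u (enum_rank (inr (insubd (Ordinal hb) n, m) : Cl)) 0.
  have hE : forall l : 'I_kt, E l = u (enum_rank (inr (l, m) : Cl)) 0.
    by move=> l; rewrite /E; congr (u (enum_rank (inr (_, m))) 0); apply: val_inj; rewrite val_insubd ltn_ord.
  set zp := \poly_(n < kt) E n.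
  have hzx : forall x, zp.[x] = \sum_(l < kt) x ^+ l * u (enum_rank (inr (l, m) : Cl)) 0.
    move=> x; rewrite (horner_coef_wide _ (size_poly _ _)); apply: eq_bigr => l _.
    by rewrite coef_poly ltn_ord hE mulrC.
  set L := (if (m < M - K)%N then kt else kt.-1).
  set rs := [seq (((m + j * M) %/ e).+1)%:R : C | j <- iota 0 L].
  have hz0 : zp = 0.
    apply: (@roots_geq_poly_eq0 _ zp rs).
    - apply/allP => r /mapP [j hj ->]; rewrite mem_iota add0n in hj.
      have hb1 := layer_bound hj.
      have he : (0 < e)%N by case: (posnP e) hb1 => // ->; rewrite muln0.
      have hv : ((m + j * M) %/ e < Kt)%N by rewrite ltn_divLR.
      have [k hk] := kap_onto hv.
      have -> : (((m + j * M) %/ e).+1)%:R = tv k by rewrite /tv hk.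
      rewrite /root hzx -hrow big1 // => cc _.
      by rewrite eq_sym (negbTE (layer_miss (ltn_ord m) hb1 hk (ltn_ord cc))) mul0r.
    - rewrite map_inj_in_uniq ?iota_uniq // => j1 j2 h1 h2 /eqP.
      rewrite eqr_nat eqSS => /eqP h12.
      rewrite mem_iota add0n in h1; rewrite mem_iota add0n in h2.
      have hb1 := layer_bound h1; have hb2 := layer_bound h2.
      have he : (0 < e)%N by case: (posnP e) hb1 => // ->; rewrite muln0.
      have heM : (e <= M)%N by lia.
      have mono : forall a b, (a < b)%N -> ((m + a * M) %/ e < (m + b * M) %/ e)%N.
        move=> a b hab.
        have : ((m + a * M) + e <= m + b * M)%N.
          have : (a * M + M <= b * M)%N by rewrite addnC -mulSn leq_mul2r hab orbT.
          lia.
        move/(leq_div2r e); rewrite divnDr ?dvdnn // divnn he addn1.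
        by [].
      case: (ltngtP j1 j2) => // h; first by have := mono _ _ h; rewrite h12 ltnn.
      by have := mono _ _ h; rewrite h12 ltnn.
    - rewrite size_map size_iota /L; case: ifP => hmK; first exact: size_poly.
      apply/leq_sizeP => n hn; rewrite coef_poly; case: ltnP => // hnk.
      have -> : n = kt.-1 by lia.
      have hk1 : (kt.-1 < kt)%N by lia.
      rewrite /E (_ : insubd (Ordinal hb) kt.-1 = Ordinal hk1); last first.
        by apply: val_inj; rewrite val_insubd hk1.
      by apply: hu_nsel; rewrite /= ltnn hmK.
  by rewrite -hE; move: (coef_poly kt E l0); rewrite ltn_ord -/zp hz0 coef0 => <-.
have hv : forall k (cc : 'I_Nt), u (enum_rank (inl (k, cc) : Cl)) 0 = 0.
  move=> k cc.
  have := hrow k (Ordinal (pos_lt k cc)).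
  rewrite [X in _ = X]big1; last by move=> l _; rewrite hz mulr0.
  rewrite (bigD1 cc) //= eqxx mul1r big1 ?addr0 // => cc' ncc.
  case: eqP => [e1|]; last by rewrite mul0r.
  exfalso; move/eqP: ncc; apply; apply: val_inj; apply: (pos_inj (k := k)).
  - exact: leq_trans (ltn_ord cc') hNtKM.
  - exact: leq_trans (ltn_ord cc) hNtKM.
  by rewrite e1.
have hu0 : u = 0.
  apply/matrixP => c j; rewrite (ord1 j) [RHS]mxE -(enum_valK c).
  by case: (enum_val c) => [[k cc]|[l m]]; [exact: hv | exact: hz].
apply/matrixP => i j; rewrite (ord1 j) [RHS]mxE.
have : u (sigm i) 0 = w i 0.
  rewrite /u mxE (bigD1 i) //= mxE eqxx mul1r big1 ?addr0 // => i' ni; rewrite mxE.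
  by case: eqP => [/sig_inj e1|]; [rewrite e1 eqxx in ni | rewrite mul0r].
by rewrite hu0 mxE => <-.
Qed.

Lemma qp1_neq0 (t : 'I_d) : (qp t).[tv beta] != 0.
Proof.
rewrite -rootE root_prod_XsubC /tv kap_beta; apply/negP => /mapP [j hj].
rewrite mem_iota add0n in hj => /eqP; rewrite eqr_nat eqSS eq_sym => /eqP h0.
have hk2 : (1 < kt)%N by lia.
have he := he0 hk2.
have ht : (t < K)%N by apply: leq_trans hdle.
have : (0 < (M - K + t + j * M) %/ e)%N.
  by rewrite divn_gt0 //; lia.
by rewrite h0.
Qed.

Lemma Fk_beta : Fk hKt hNt ypt beta != 0.
Proof.
set D := \det (colsub sigm (Amx ypt)).
have hD : D != 0 := ypt_det.
rewrite /Fk.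
have -> : rowsub (rsel Kt Kr Mr kt hNt) (Vb hKt hNt ypt beta) =
    diag_mx (\row_(t < d) (D * (qp t).[tv beta])).
  have hU : Umx hKt hNt ypt = D *: gmx ypt by rewrite /Umx kpar_ker // ypt_ker.
  apply/matrixP => t1 t2.
  rewrite [LHS]mxE /Vb [LHS]mxE hU [LHS]mxE [X in D * X]mxE enum_rankK [RHS]mxE [X in X *+ _]mxE /=.
  have ht1 : (t1 < K)%N by apply: leq_trans hdle.
  have hr : (val (rsel Kt Kr Mr kt hNt t1) = Nt - K + t1)%N.
    by rewrite val_insubd /Kd; case: ifP => //; lia.
  have -> : pos beta (rsel Kt Kr Mr kt hNt t1) = (M - K + t1)%N.
    rewrite /pos hr kap_beta mul1n modn_small; lia.
  rewrite eqn_add2l.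
  case: (eqVneq t1 t2) => [<-|n12]; first by rewrite eqxx mul1r mulr1n.
  have -> : (val t1 == val t2) = false by apply/negbTE.
  by rewrite mul0r mulr0.
rewrite det_diag prodf_seq_neq0; apply/allP => t _; rewrite mxE mulf_neq0 //.
exact: qp1_neq0.
Qed.
End Point.

Unset Implicit Arguments.
Theorem proposition1 (C : numClosedFieldType) (Kt Kr Mr Nt kt d : nat)
  (hKt : (0 < Kt)%N) (hKr : (0 < Kr)%N) (hMr : (0 < Mr)%N) (hNt : (0 < Nt)%N)
  (hNtKM : (Nt <= Kr * Mr)%N)
  (hkt : (kt <= Kt - 1)%N)
  (hlow : ((Kt - 1) * Nt <= Kr * (Kt - kt) * Mr)%N)
  (hup : (Kr * (Kt - kt) * Mr < Kt * Nt)%N)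
  (hd : (0 < d)%N)
  (hdle : (d <= Kt * Nt - Kr * (Kt - kt) * Mr)%N) :
  generic (fun x : 'I_Kr * 'I_Kt * 'I_Mr * 'I_Nt -> C =>
    exists V : 'I_Kt -> 'M[C]_(Nt, d),
      (forall k : 'I_Kt, \rank (V k) = d) /\
      (forall j : 'I_Kr,
         (\rank (\mxrow_(k < Kt) (chan x j k *m V k)) <= kt * d)%N)).
Proof.
apply: (@assemble C Kt Kr Mr Nt kt d hKt hNt) => k.
exists (ypt C (Kr := Kr) (Mr := Mr) (Nt := Nt) (kt := kt) (d := d) hKt k).
exact: (Fk_beta C hKt hKr hMr hNt hNtKM hkt hlow hup hd hdle k).
Qed.
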